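(* In the model described in the context, Algorithm 1 with any threshold $t\ge\tau+f$ satisfies strong accuracy.
   Context: Model. An asynchronous system has client processes (writers, readers, auditors) and $n$ storage objects $o_1,\dots,o_n$. Each $o_k$ is a linearisable loggable read/write register with a log $L_k$ (initially empty). Its rw-write($b$) stores a block; rw-read() returns the current block (or $\perp$) and appends $\langle p_r,\mathit{label}(b)\rangle$ to $L_k$, where $p_r$ is the reader and $\mathit{label}(b)$ identifies the value from which $b$ was derived; rw-getLog() returns $L_k$. A multi-writer multi-reader register over values $\mathbb{V}$ is emulated by information dispersal. An a-write($v$) encodes $v$ into $b_{v_1},\dots,b_{v_n}$ with $b_{v_k}$ sent to $o_k$. Any $\tau$ distinct blocks of $v$ recover $v$, and fewer do not. Reads are fast, concurrency is unlimited, and writes may remain incomplete. Faults. At most $f$ objects are faulty; a faulty object may crash, omit its block, omit log records from auditors, and report records of nonexistent reads (for arbitrary readers and values). Providing set $P_{p_r,v}$: the set of objects that received a write of $b_{v_k}$ and responded $b_{v_k}$ to a read of $p_r$. The value $v$ is effectively read by $p_r$ iff $|P_{p_r,v}|\ge\tau$. Algorithm 1 (a-audit with threshold $t$): 1. Invoke rw-getLog on all $n$ objects in parallel, and wait for responses from at least $n-f$; let $L[k]$ be the log received from $o_k$. 2. For every record $\langle p_r,\mathit{label}(v)\rangle$ in some $L[k]$, let $\mathcal{E}_{p_r,v}=\{k:\langle p_r,\mathit{label}(v)\rangle\in L[k]\}$, and add it to $E_A$ iff $|\mathcal{E}_{p_r,v}|\ge t$. 3. Return $E_A$. Strong accuracy: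 for every correct reader $p_r$ and every value $v$, $|P_{p_r,v}|<\tau$ before the audit implies $\mathcal{E}_{p_r,v}\notin E_A$. *)

(* Defs.v *)
From mathcomp Require Import all_boot.
Set Implicit Arguments. Unset Strict Implicit. Unset Printing Implicit Defensive.

Section Model.
Variables (Reader Val Lab : eqType) (label : Val -> Lab).

(* A log record <p_r, label(b)>; label is [None] when the read returned bottom. *)
Definition record := (Reader * option Lab)%type.

(* Operations linearized at a single storage object o_k.  Blocks are
   identified by the value they were derived from: at object k, the block of
   value v is b_{v_k}. *)
Inductive op :=
| OWrite of Val
| ORead of Reader & option Val
| OGetLog of seq record.

(* A timed history of one object: (global time, operation), in linearization
   order. *)
Definition history := seq (nat * op).

Definition last_write (pre : history) : option Val :=
  foldl (fun acc (ev : nat * op) => if ev.2 is OWrite v then Some v else acc)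
        None pre.

Definition read_record (ev : nat * op) : option record :=
  if ev.2 is ORead p r then Some (p, omap label r) else None.

Definition log_of (pre : history) : seq record := pmap read_record pre.

Definition correct_hist (h : history) : Prop :=
  forall i, i < size h ->
    match (nth (0, OGetLog [::]) h i).2 with
    | OWrite _ => True
    | ORead _ r => r = last_write (take i h)
    | OGetLog L => L = log_of (take i h)
    end.

Definition occurs_by (h : history) (P : op -> bool) (e : nat) : bool :=
  has (fun ev : nat * op => (ev.1 <= e) && P ev.2) h.

Definition is_write_of (v : Val) (o : op) : bool :=
  if o is OWrite w then w == v else false.
Definition is_read_of (p : Reader) (v : Val) (o : op) : bool :=
  if o is ORead q (Some w) then (q == p) && (w == v) else false.
End Model.

Section Audit.
Variables (n : nat) (Reader Val Lab : eqType) (label : Val -> Lab).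

Definition providing (h : 'I_n -> history Reader Val Lab) (p : Reader) (v : Val)
  (e : nat) : {set 'I_n} :=
  [set k | occurs_by (h k) (is_write_of v) e &&
           occurs_by (h k) (is_read_of p v) e].

(* Responses received by the auditor in step 1 of Algorithm 1:
   [resp k = Some L] iff o_k responded with log L. *)
Definition audit_responses := 'I_n -> option (seq (record Reader Lab)).

Definition evidence (resp : audit_responses) (rc : record Reader Lab) : {set 'I_n} :=
  [set k | if resp k is Some L then rc \in L else false].

Definition audit_reports (t : nat) (resp : audit_responses)
  (rc : record Reader Lab) : bool := t <= #|evidence resp rc|.

Definition valid_audit (f : nat) (h : 'I_n -> history Reader Val Lab)
  (resp : audit_responses) (e : nat) : Prop :=
  (n - f <= #|[set k | resp k != None]|) /\
  forall k L, resp k = Some L ->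
    exists2 i, i < size (h k) &
      ((nth (0, @OGetLog Reader Val Lab [::]) (h k) i).1 <= e) /\
      ((nth (0, @OGetLog Reader Val Lab [::]) (h k) i).2 = @OGetLog Reader Val Lab L).
End Audit.

(* Main.v *)
Require Import Defs.
From mathcomp Require Import all_boot.

Section Helpers.
Variables (Reader Val Lab : eqType) (label : Val -> Lab).
Notation hist := (history Reader Val Lab).
Notation x0 := (0, @OGetLog Reader Val Lab [::]).

Lemma foldl_lw (pre : hist) acc v :
  foldl (fun acc (ev : nat * op Reader Val Lab) => if ev.2 is OWrite v then Some v else acc) acc pre = Some v ->
  acc = Some v \/ exists2 j, j < size pre & (nth x0 pre j).2 = @OWrite Reader Val Lab v.
Proof.
elim: pre acc => [|ev pre IH] acc /=; first by left.
move=> /IH [Hacc|[j Hj Hn]]; last by right; exists j.+1.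
case: ev Hacc => t [w|q r|L] /= Hacc; try by left.
by right; exists 0 => //=; case: Hacc => ->.
Qed.

Lemma lw_nth (pre : hist) v : last_write pre = Some v ->
  exists2 j, j < size pre & (nth x0 pre j).2 = @OWrite Reader Val Lab v.
Proof. by move=> /foldl_lw [] //. Qed.

Lemma log_nth (pre : hist) (rc : record Reader Lab) : rc \in log_of label pre ->
  exists2 j, j < size pre & read_record label (nth x0 pre j) = Some rc.
Proof.
rewrite /log_of; elim: pre => [|ev pre IH] //=.
case Er: (read_record label ev) => [r|] /=.
- rewrite in_cons => /orP [/eqP ->|/IH [j Hj Hn]]; first by exists 0.
  by exists j.+1.
- by move=> /IH [j Hj Hn]; exists j.+1.
Qed.

Lemma time_mono (h : hist) i j : sorted leq [seq ev.1 | ev <- h] ->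
  j <= i -> i < size h -> (nth x0 h j).1 <= (nth x0 h i).1.
Proof.
move=> Hs Hji Hi.
have := @sorted_leq_nth _ leq leq_trans leqnn 0 _ Hs j i.
rewrite !inE size_map !(nth_map x0) //; last by apply: leq_ltn_trans Hi.
apply => //; by apply: leq_ltn_trans Hi.
Qed.

Lemma key (h : hist) p v e i L : injective label ->
  sorted leq [seq ev.1 | ev <- h] -> correct_hist label h ->
  i < size h -> (nth x0 h i).1 <= e -> (nth x0 h i).2 = @OGetLog Reader Val Lab L ->
  (p, Some (label v)) \in L ->
  occurs_by h (is_write_of v) e && occurs_by h (is_read_of p v) e.
Proof.
move=> inj Hs Hc Hi He Hn Hin.
have := Hc i Hi; rewrite Hn => HL; subst L.
have [j Hj Hr] := log_nth _ _ Hin.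
rewrite size_take Hi in Hj.
rewrite nth_take // in Hr.
have Hji : j < size h by apply: ltn_trans Hi.
have Hcj := Hc j Hji.
move: Hr Hcj; rewrite /read_record.
case Enj: (nth x0 h j) => [tj oj]; case: oj Enj => // q r Enj [<- Hr] /= Hlw.
move: Enj Hr Hlw; case: r => //= w Enj [Hw] Hlw.
have {}Hw := inj _ _ Hw; subst w.
have [k Hk Hwk] := lw_nth _ _ (esym Hlw).
rewrite size_take Hji in Hk.
rewrite nth_take // in Hwk.
have Hki : k < size h by apply: ltn_trans Hji.
have Htj : (nth x0 h j).1 <= e.
  apply: leq_trans He; apply: time_mono => //; exact: ltnW.
have Htk : (nth x0 h k).1 <= e.
  apply: leq_trans Htj; apply: time_mono => //; exact: ltnW.
apply/andP; split; apply/(has_nthP x0).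
- by exists k => //; rewrite Htk Hwk /= eqxx.
- by exists j => //; rewrite Htj Enj /= !eqxx.
Qed.
End Helpers.

Theorem lemma7 (n f tau t : nat) (Reader Val Lab : eqType)
  (label : Val -> Lab) (label_inj : injective label)
  (F : {set 'I_n})                          (* the faulty objects *)
  (h : 'I_n -> history Reader Val Lab)      (* linearized timed histories *)
  (resp : audit_responses n Reader Lab)     (* logs received by the audit *)
  (e : nat) :                               (* completion time of the audit *)
  tau + f <= t ->
  #|F| <= f ->
  (forall k, sorted leq [seq ev.1 | ev <- h k]) ->
  (forall k, k \notin F -> correct_hist label (h k)) ->
  valid_audit f h resp e ->
  forall (p : Reader) (v : Val),
    #|providing h p v e| < tau ->
    ~~ audit_reports t resp (p, Some (label v)).
Proof.
move=> Ht HF Hs Hc [_ Hv] p v Hp.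
rewrite /audit_reports -ltnNge.
have Hsub : evidence resp (p, Some (label v)) \subset F :|: providing h p v e.
  apply/subsetP => k; rewrite inE in_setU.
  case Er: (resp k) => [L|] // Hin.
  case: (boolP (k \in F)) => //= HkF.
  have [i Hi [He Hn]] := Hv k L Er.
  by rewrite inE (@key _ _ _ label _ _ _ _ _ _ label_inj (Hs k) (Hc k HkF) Hi He Hn Hin).
apply: leq_ltn_trans (subset_leq_card Hsub) _.
apply: leq_ltn_trans (leq_card_setU _ _) _.
apply: leq_trans Ht.
by rewrite addnC -addSn leq_add.
Qed.
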